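(* Let $\Omega\subset\mathbb R^2$ be a domain, and let $h\in H_\rho$ be a boundary element whose realization $s_h$ is a single point. Then for every sequence $\{x_m\}\subset\Omega$ with $\rho_{(F,V)}(x_m,h)\to0$, one has $|x_m-s_h|\to0$ as $m\to\infty$.
   Context: The conformal capacity of a condenser is $\mathrm{cap}(F_0,F_1;\Omega)=\inf\int_\Omega|\nabla v|^2dx$, where the infimum is over nonnegative continuous $v$ with square integrable weak gradient, $v=0$ near $F_0$, and $v\ge1$ near $F_1$. Fix a continuum $F\subset\Omega$ and a domain $V$ with $F\subset V\subset\overline V\subset\Omega$, $\overline V$ compact, and $\partial V$ a quasiconformal image of the unit circle. The conformal capacitary metric is $$\rho_{(F,V)}(x,y)=\inf_{l(x,y)}\big\{\mathrm{cap}^{1/2}(F,l\setminus V;\Omega)+\mathrm{cap}^{1/2}(\partial\Omega,l\cap V;\Omega)\big\},$$ where the infimum is over rectifiable curves $l$ in $\Omega$ joining $x$ and $y$. Let $\widetilde\Omega_\rho$ be the completion of $(\Omega,\rho_{(F,V)})$ and $H_\rho=\widetilde\Omega_\rho\setminus\Omega$. For $h\in H_\rho$, let $D(h,\varepsilon)$ denote the $\rho$-ball of radius $\varepsilon$ about $h$ in $\widetilde\Omega_\rho$. The realization (impression) of $h$ is $s_h=\bigcap_{\varepsilon>0}\overline{D(h,\varepsilon)\cap\Omega}\subset\overline{\mathbb R^2}$, where the closure is Euclidean. *)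

(* Defs.v *)
From HB Require Import structures.
From mathcomp Require Import all_boot all_order all_algebra.
From mathcomp Require Import all_classical all_reals all_analysis.
Set Implicit Arguments. Unset Strict Implicit. Unset Printing Implicit Defensive.
Import Order.TTheory GRing.Theory Num.Theory.
Import numFieldNormedType.Exports.
Local Open Scope classical_set_scope.
Local Open Scope ring_scope.

Section Defs.
Variable R : realType.
Local Notation P := (R * R)%type.

Definition enorm (p : P) : R := Num.sqrt (p.1 ^+ 2 + p.2 ^+ 2).
Definition pdist (p q : P) : R := enorm (p.1 - q.1, p.2 - q.2).

Definition leb2 := (@lebesgue_measure R \x @lebesgue_measure R)%E.

Definition domain (O : set P) := open O /\ connected O /\ O !=set0.

Definition bdry (O : set P) : set P := closure O `\` interior O.

Definition bounded2 (A : set P) := exists M : R, forall x, A x -> enorm x <= M.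

Definition continuum (F : set P) :=
  compact F /\ connected F /\ exists x y, F x /\ F y /\ x <> y.

(* partial derivatives (b = false: first variable, b = true: second) *)
Definition partial (b : bool) (f : P -> R) : P -> R :=
  fun p => if b then derive1 (fun t => f (p.1, t)) p.2
           else derive1 (fun t => f (t, p.2)) p.1.

Fixpoint dpart (l : seq bool) (f : P -> R) : P -> R :=
  if l is b :: l' then partial b (dpart l' f) else f.

Definition smooth (f : P -> R) :=
  forall l, continuous (dpart l f) /\
    forall p, derivable (fun t => dpart l f (t, p.2)) p.1 1 /\
              derivable (fun t => dpart l f (p.1, t)) p.2 1.

Definition test_fun (O : set P) (phi : P -> R) :=
  smooth phi /\ exists K, compact K /\ K `<=` O /\ forall x, ~ K x -> phi x = 0.

Definition weak_grad_L2 (O : set P) (v g1 g2 : P -> R) :=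
  measurable_fun O g1 /\ measurable_fun O g2 /\
  (\int[leb2]_(x in O) ((g1 x) ^+ 2 + (g2 x) ^+ 2)%:E < +oo)%E /\
  forall phi, test_fun O phi ->
    (\int[leb2]_(x in O) (v x * partial false phi x)%:E
       = - \int[leb2]_(x in O) (g1 x * phi x)%:E)%E /\
    (\int[leb2]_(x in O) (v x * partial true phi x)%:E
       = - \int[leb2]_(x in O) (g2 x * phi x)%:E)%E.

(* "near" a set E (neighbourhood in the plane); for E = boundary of O the
   neighbourhood is taken in the extended plane, i.e. it also contains a
   neighbourhood of infinity (relevant only when O is unbounded). *)
Definition zero_near (O E : set P) (v : P -> R) :=
  exists U, open U /\ E `<=` U /\ forall x, O x -> U x -> v x = 0.
Definition zero_near_bdry (O : set P) (v : P -> R) :=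
  exists U (M : R), open U /\ bdry O `<=` U /\
    forall x, O x -> (U x \/ M < enorm x) -> v x = 0.
Definition ge1_near (O E : set P) (v : P -> R) :=
  exists U, open U /\ E `<=` U /\ forall x, O x -> U x -> 1 <= v x.

Definition admissible_base (O : set P) (v g1 g2 : P -> R) :=
  (forall x, O x -> 0 <= v x) /\ (forall x, O x -> {for x, continuous v}) /\
  weak_grad_L2 O v g1 g2.

Definition energy (O : set P) (g1 g2 : P -> R) : \bar R :=
  (\int[leb2]_(x in O) ((g1 x) ^+ 2 + (g2 x) ^+ 2)%:E)%E.

Definition cap (O F0 F1 : set P) : \bar R :=
  ereal_inf [set e | exists v g1 g2, admissible_base O v g1 g2 /\
     zero_near O F0 v /\ ge1_near O F1 v /\ e = energy O g1 g2].

Definition cap_bdry (O F1 : set P) : \bar R :=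
  ereal_inf [set e | exists v g1 g2, admissible_base O v g1 g2 /\
     zero_near_bdry O v /\ ge1_near O F1 v /\ e = energy O g1 g2].

Definition esqrt (e : \bar R) : \bar R :=
  match e with
  | r%:E => (Num.sqrt r)%:E
  | +oo%E => +oo%E
  | -oo%E => 0%E
  end.

Definition I01 : set R := [set t | 0 <= t <= 1].

Definition rect_curve (O : set P) (x y : P) (gamma : R -> P) :=
  {within I01, continuous gamma} /\
  (forall t, I01 t -> O (gamma t)) /\ gamma 0 = x /\ gamma 1 = y /\
  exists L : R, forall (n : nat) (t : nat -> R),
    t 0%N = 0 -> t n = 1 -> (forall i, (i < n)%N -> t i <= t i.+1) ->
    \sum_(i < n) pdist (gamma (t i.+1)) (gamma (t i)) <= L.

Definition rho (O F V : set P) (x y : P) : \bar R :=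
  ereal_inf [set e | exists gamma, rect_curve O x y gamma /\
    let l := gamma @` I01 in
    e = (esqrt (cap O F (l `\` V)) + esqrt (cap_bdry O (l `&` V)))%E].

(* Boundary elements h of the completion, represented by rho-Cauchy
   sequences in O having no rho-limit in O. *)
Definition rho_cauchy (O F V : set P) (a : nat -> P) :=
  (forall n, O (a n)) /\
  forall eps : R, 0 < eps -> exists N, forall m n, (N <= m)%N -> (N <= n)%N ->
    (rho O F V (a m) (a n) < eps%:E)%E.

Definition bdry_elt (O F V : set P) (a : nat -> P) :=
  rho_cauchy O F V a /\
  ~ exists y, O y /\ ((rho O F V (a n) y) @[n --> \oo] --> 0%E).

(* distance in the completion from a point x of O to h = [a] *)
Definition rho_h (O F V : set P) (a : nat -> P) (x : P) : \bar R :=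
  limn (fun n => rho O F V x (a n)).

Definition Dh (O F V : set P) (a : nat -> P) (eps : R) : set P :=
  [set x | O x /\ (rho_h O F V a x < eps%:E)%E].

(* finite part of the realization s_h *)
Definition s_h_fin (O F V : set P) (a : nat -> P) : set P :=
  [set y | forall eps : R, 0 < eps -> closure (Dh O F V a eps) y].
(* infinity belongs to s_h *)
Definition s_h_inf (O F V : set P) (a : nat -> P) : Prop :=
  forall eps : R, 0 < eps -> ~ bounded2 (Dh O F V a eps).

Definition quasiconformal (f : P -> P) :=
  continuous f /\ bijective f /\
  (exists g, cancel f g /\ cancel g f /\ continuous g) /\
  exists H : R, forall x, \forall r \near 0^'+,
    (forall y z, pdist y x = r -> pdist z x = r ->
      pdist (f y) (f x) <= H * pdist (f z) (f x)).

Definition unit_circle : set P := [set p | enorm p = 1].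

Definition admissible_V (O F V : set P) :=
  domain V /\ F `<=` V /\ closure V `<=` O /\ compact (closure V) /\
  exists f, quasiconformal f /\ bdry V = f @` unit_circle.

End Defs.

(* Main.v *)
Require Import Defs.
From HB Require Import structures.
From mathcomp Require Import all_boot all_order all_algebra.
From mathcomp Require Import all_classical all_reals all_analysis.
From mathcomp Require Import lra.
Import Order.TTheory GRing.Theory Num.Theory.
Import numFieldNormedType.Exports.
Local Open Scope classical_set_scope.
Local Open Scope ring_scope.

Lemma ballP2 (R : realType) (p q : R * R) e :
  ball p e q -> `|p.1 - q.1| < e /\ `|p.2 - q.2| < e.
Proof. move=> [h1 h2]; move: h1 h2; rewrite /ball /=. by []. Qed.

Lemma sqrt_le (R : realType) (a b : R) : Num.sqrt (a^+2 + b^+2) <= `|a| + `|b|.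
Proof.
rewrite -(@ger0_norm _ (`|a|+`|b|)); last by rewrite addr_ge0.
rewrite -sqrtr_sqr ler_sqrt; last by rewrite sqr_ge0.
rewrite sqrrD !real_normK ?num_real //.
rewrite -addrA lerD2l lerDr. by rewrite mulrn_wge0 // mulr_ge0.
Qed.

Lemma coord_le (R : realType) (a b : R) : `|a| <= Num.sqrt (a^+2 + b^+2).
Proof.
by rewrite -sqrtr_sqr ler_sqrt ?addr_ge0 ?sqr_ge0 // lerDl sqr_ge0.
Qed.

Theorem lemma2p14 (R : realType) (O F V : set (R * R)) (a : nat -> R * R)
  (p : R * R) (x : nat -> R * R) :
  domain O -> continuum F -> F `<=` O -> admissible_V O F V ->
  bdry_elt O F V a ->
  s_h_fin O F V a = [set p] -> ~ s_h_inf O F V a ->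
  (forall m, O (x m)) ->
  ((rho_h O F V a (x m)) @[m --> \oo] --> 0%E) ->
  ((pdist (x m) p) @[m --> \oo] --> 0).
Proof.
move=> _ _ _ _ _ sh shinf Ox cvx.
have [eps0 [eps0pos [M bM]]] : exists eps0 : R, 0 < eps0 /\ bounded2 (Dh O F V a eps0).
  apply: contrapT => H; apply: shinf => eps ep Hb; apply: H; by exists eps.
have evD : forall eps : R, 0 < eps -> \forall m \near \oo, Dh O F V a eps (x m).
  move=> eps ep.
  have : \forall m \near \oo, (rho_h O F V a (x m) < eps%:E)%E.
    apply: (cvx [set u | (u < eps%:E)%E]); exact: open_ereal_lt'.
  by apply: filterS => m hm; split.
pose N := `|M| + `|p.1| + `|p.2| + 1.
pose K := `[- N, N] `*` `[- N, N].
have cK : compact K by apply: compact_setX; exact: segment_compact.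
have clp : forall y, cluster (x @ \oo) y -> y = p.
  move=> y hy.
  have : s_h_fin O F V a y.
    move=> eps ep B nB; exact: (hy _ _ (evD eps ep) nB).
  by rewrite sh.
have xp : x @ \oo --> p.
  have nK : nbhs p K.
    apply: (filterS _ (nbhsx_ballx p 1 ltr01)) => q /ballP2 [h1 h2].
    have n1 := ler_normD (q.1 - p.1) p.1; rewrite subrK in n1.
    have n2 := ler_normD (q.2 - p.2) p.2; rewrite subrK in n2.
    rewrite distrC in h1; rewrite distrC in h2.
    have := normr_ge0 M; have := normr_ge0 p.1; have := normr_ge0 p.2.
    move=> *.
    split; rewrite /= in_itv /= -ler_norml /N; lra.
  have FK : (x @ \oo) K.
    apply: filterS (evD eps0 eps0pos) => m /bM hq; move: hq; set q := x m => hq.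
    have hM : M <= `|M| by exact: ler_norm.
    have c1 := coord_le _ q.1 q.2; have c2 := coord_le _ q.2 q.1.
    rewrite /enorm in hq; rewrite addrC in c2.
    have := normr_ge0 p.1; have := normr_ge0 p.2.
    move=> *.
    split; rewrite /= in_itv /= -ler_norml /N; lra.
  apply: (@compact_cluster_set1 _ p _ K) => //.
  apply/seteqP; split => y.
    by move=> /clp ->.
  move=> -> /=.
  have [z [_ hz]] := cK (x @ \oo) _ FK.
  by rewrite -(clp z hz).
apply/cvgrPdist_lt => e e0.
have e2 : 0 < e / 2 by lra.
have H : \forall m \near \oo, ball p (e / 2) (x m).
  by apply: xp; exact: nbhsx_ballx.
move: H; apply: filterS => m /ballP2 [h1 h2].
rewrite /pdist /enorm /= sub0r normrN ger0_norm ?sqrtr_ge0 //.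
have := sqrt_le _ ((x m).1 - p.1) ((x m).2 - p.2).
rewrite distrC in h1; rewrite distrC in h2.
lra.
Qed.
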